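(* Let $f:M\to N$ be a proximity morphism of MT-algebras. Then (1) $f$ is an isomorphism in $\mathbf{MT_P}$ iff $f|_{\mathcal O M}:\mathcal O M\to\mathcal O N$ is an isomorphism of frames; (2) $f$ is a monomorphism in $\mathbf{MT_P}$ iff $f|_{\mathcal O M}$ is a monomorphism in $\mathbf{Frm}$; (3) $f$ is an epimorphism in $\mathbf{MT_P}$ iff $f|_{\mathcal O M}$ is an epimorphism in $\mathbf{Frm}$.
   Context: An MT-algebra is a pair $(M,\square)$ where $M$ is a complete boolean algebra and $\square:M\to M$ satisfies $\square 1=1$, $\square(a\wedge b)=\square a\wedge\square b$, $\square a\le a$, $\square a\le\square\square a$; $\Diamond a=\neg\square\neg a$; open: $\square a=a$; locally closed: $a=\square b\wedge\Diamond c$; $\mathcal O M$, $\mathcal{LC}M$ the sets of open and locally closed elements ($\mathcal O M$ is a frame). A proximity morphism $f:M\to N$ is a map with (P1) $f|_{\mathcal O M}:\mathcal O M\to\mathcal O N$ a frame morphism; (P2) $f(a\wedge b)=f(a)\wedge f(b)$; (P3) $f(\bigvee S)=\bigvee f[S]$ for finite $S\subseteq\mathcal{LC}M$; (P4) $f(a)=\bigvee\{f(x):x\in\mathcal{LC}M, x\le a\}$. $\mathbf{MT_P}$ is the category of MT-algebras and proximity morphisms with composition $(g\star f)(a)=\bigvee\{g(f(x)):x\in\mathcal{LC}M_1,x\le a\}$ and identities $1_M(a)=\bigvee\{x\in\mathcal{LC}M:x\le a\}$. $\mathbf{Frm}$ is the category of frames and frame morphisms. *)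

(* Defs.v *)
From Stdlib Require Import List ProofIrrelevance.
Set Implicit Arguments.

Record CBA : Type := {
  cb_car :> Type;
  cb_le : cb_car -> cb_car -> Prop;
  cb_meet : cb_car -> cb_car -> cb_car;
  cb_join : cb_car -> cb_car -> cb_car;
  cb_top : cb_car;
  cb_bot : cb_car;
  cb_neg : cb_car -> cb_car;
  cb_sup : (cb_car -> Prop) -> cb_car;
  cb_refl : forall a, cb_le a a;
  cb_trans : forall a b c, cb_le a b -> cb_le b c -> cb_le a c;
  cb_antisym : forall a b, cb_le a b -> cb_le b a -> a = b;
  cb_meet_l : forall a b, cb_le (cb_meet a b) a;
  cb_meet_r : forall a b, cb_le (cb_meet a b) b;
  cb_meet_univ : forall a b c, cb_le c a -> cb_le c b -> cb_le c (cb_meet a b);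
  cb_join_l : forall a b, cb_le a (cb_join a b);
  cb_join_r : forall a b, cb_le b (cb_join a b);
  cb_join_univ : forall a b c, cb_le a c -> cb_le b c -> cb_le (cb_join a b) c;
  cb_top_ge : forall a, cb_le a cb_top;
  cb_bot_le : forall a, cb_le cb_bot a;
  cb_sup_ub : forall (S : cb_car -> Prop) x, S x -> cb_le x (cb_sup S);
  cb_sup_least : forall (S : cb_car -> Prop) c,
      (forall x, S x -> cb_le x c) -> cb_le (cb_sup S) c;
  cb_distr : forall a b c,
      cb_meet a (cb_join b c) = cb_join (cb_meet a b) (cb_meet a c);
  cb_compl_meet : forall a, cb_meet a (cb_neg a) = cb_bot;
  cb_compl_join : forall a, cb_join a (cb_neg a) = cb_top;
  (* infinite distributivity: a theorem for every complete boolean algebra,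
     included for convenience (redundant) *)
  cb_inf_distr : forall a (S : cb_car -> Prop),
      cb_meet a (cb_sup S) = cb_sup (fun y => exists x, S x /\ y = cb_meet a x)
}.
Arguments cb_le {_} _ _.
Arguments cb_meet {_} _ _.
Arguments cb_join {_} _ _.
Arguments cb_top {_}.
Arguments cb_bot {_}.
Arguments cb_neg {_} _.
Arguments cb_sup {_} _.

Record MTAlg : Type := {
  mt_cba :> CBA;
  box : mt_cba -> mt_cba;
  box_top : box cb_top = cb_top;
  box_meet : forall a b, box (cb_meet a b) = cb_meet (box a) (box b);
  box_le : forall a, cb_le (box a) a;
  box_4 : forall a, cb_le (box a) (box (box a))
}.
Arguments box {_} _.

Definition dia {M : MTAlg} (a : M) : M := cb_neg (box (cb_neg a)).
Definition is_open {M : MTAlg} (a : M) : Prop := box a = a.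
Definition is_LC {M : MTAlg} (a : M) : Prop :=
  exists b c : M, a = cb_meet (box b) (dia c).

Definition img {A B : Type} (f : A -> B) (S : A -> Prop) : B -> Prop :=
  fun y => exists x, S x /\ y = f x.

Record Frame : Type := {
  fr_car :> Type;
  fr_le : fr_car -> fr_car -> Prop;
  fr_meet : fr_car -> fr_car -> fr_car;
  fr_top : fr_car;
  fr_sup : (fr_car -> Prop) -> fr_car;
  fr_refl : forall a, fr_le a a;
  fr_trans : forall a b c, fr_le a b -> fr_le b c -> fr_le a c;
  fr_antisym : forall a b, fr_le a b -> fr_le b a -> a = b;
  fr_meet_l : forall a b, fr_le (fr_meet a b) a;
  fr_meet_r : forall a b, fr_le (fr_meet a b) b;
  fr_meet_univ : forall a b c, fr_le c a -> fr_le c b -> fr_le c (fr_meet a b);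
  fr_top_ge : forall a, fr_le a fr_top;
  fr_sup_ub : forall (S : fr_car -> Prop) x, S x -> fr_le x (fr_sup S);
  fr_sup_least : forall (S : fr_car -> Prop) c,
      (forall x, S x -> fr_le x c) -> fr_le (fr_sup S) c;
  fr_distr : forall a (S : fr_car -> Prop),
      fr_meet a (fr_sup S) = fr_sup (fun y => exists x, S x /\ y = fr_meet a x)
}.
Arguments fr_le {_} _ _.
Arguments fr_meet {_} _ _.
Arguments fr_top {_}.
Arguments fr_sup {_} _.

Definition frame_hom {F G : Frame} (h : F -> G) : Prop :=
  (forall a b, h (fr_meet a b) = fr_meet (h a) (h b)) /\
  h fr_top = fr_top /\
  (forall S : F -> Prop, h (fr_sup S) = fr_sup (img h S)).

Definition frame_iso {F G : Frame} (h : F -> G) : Prop :=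
  frame_hom h /\
  exists g : G -> F, frame_hom g /\ (forall x, g (h x) = x) /\ (forall y, h (g y) = y).

Definition frame_mono {F G : Frame} (h : F -> G) : Prop :=
  forall (E : Frame) (g1 g2 : E -> F), frame_hom g1 -> frame_hom g2 ->
    (forall x, h (g1 x) = h (g2 x)) -> forall x, g1 x = g2 x.

Definition frame_epi {F G : Frame} (h : F -> G) : Prop :=
  forall (E : Frame) (g1 g2 : G -> E), frame_hom g1 -> frame_hom g2 ->
    (forall x, g1 (h x) = g2 (h x)) -> forall y, g1 y = g2 y.

Section OpenFrame.
Variable M : MTAlg.

Lemma cb_sup_ext (S T : M -> Prop) : (forall x, S x <-> T x) -> cb_sup S = cb_sup T.
Proof.
  intros H; apply cb_antisym; apply cb_sup_least; intros x Hx;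
  apply cb_sup_ub; apply H; exact Hx.
Qed.

Lemma box_mono (a b : M) : cb_le a b -> cb_le (box a) (box b).
Proof.
  intros H.
  assert (E : cb_meet a b = a).
  { apply cb_antisym. apply cb_meet_l. apply cb_meet_univ; [apply cb_refl | exact H]. }
  rewrite <- E, box_meet. apply cb_meet_r.
Qed.

Lemma open_meet (a b : M) : is_open a -> is_open b -> is_open (cb_meet a b).
Proof. unfold is_open; intros Ha Hb; rewrite box_meet, Ha, Hb; reflexivity. Qed.

Lemma open_top : is_open (@cb_top M).
Proof. apply box_top. Qed.

Lemma open_sup (S : M -> Prop) : (forall x, S x -> is_open x) -> is_open (cb_sup S).
Proof.
  intros H; unfold is_open; apply cb_antisym. apply box_le.
  apply cb_sup_least; intros x Hx. pose proof (H x Hx) as Ex; unfold is_open in Ex.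
  apply cb_trans with (box x). rewrite Ex; apply cb_refl.
  apply box_mono, cb_sup_ub; exact Hx.
Qed.

Definition Op : Type := { a : M | is_open a }.

Definition op_le (x y : Op) : Prop := cb_le (proj1_sig x) (proj1_sig y).
Definition op_meet (x y : Op) : Op :=
  exist _ (cb_meet (proj1_sig x) (proj1_sig y)) (open_meet (proj2_sig x) (proj2_sig y)).
Definition op_top : Op := exist _ cb_top open_top.
Definition op_supset (S : Op -> Prop) : M -> Prop :=
  fun a => exists x, S x /\ a = proj1_sig x.
Lemma op_supset_open (S : Op -> Prop) x : op_supset S x -> is_open x.
Proof. intros [y [_ ->]]; exact (proj2_sig y). Qed.
Definition op_sup (S : Op -> Prop) : Op :=
  exist _ (cb_sup (op_supset S)) (@open_sup (op_supset S) (@op_supset_open S)).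

Lemma op_eq (x y : Op) : proj1_sig x = proj1_sig y -> x = y.
Proof.
  destruct x as [x Hx], y as [y Hy]; simpl; intros ->.
  f_equal; apply proof_irrelevance.
Qed.

Definition OFrame : Frame.
Proof.
  refine {| fr_car := Op; fr_le := op_le; fr_meet := op_meet; fr_top := op_top;
            fr_sup := op_sup |}; unfold op_le; simpl.
  - intros; apply cb_refl.
  - intros a b c; apply cb_trans.
  - intros a b H1 H2; apply op_eq, cb_antisym; assumption.
  - intros; apply cb_meet_l.
  - intros; apply cb_meet_r.
  - intros; apply cb_meet_univ; assumption.
  - intros; apply cb_top_ge.
  - intros S x Hx; apply cb_sup_ub; exists x; split; auto.
  - intros S c H; apply cb_sup_least; intros y [x [Hx ->]]; apply H; exact Hx.
  - intros a S; apply op_eq; simpl. rewrite cb_inf_distr.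
    apply cb_sup_ext; intros y; split.
    + intros [z [[x [Hx ->]] ->]]. exists (op_meet a x); split; [|reflexivity].
      exists x; split; auto.
    + intros [w [[x [Hx ->]] ->]]. simpl. exists (proj1_sig x); split; [|reflexivity].
      exists x; split; auto.
Defined.

End OpenFrame.

Definition restrO {M N : MTAlg} (f : M -> N)
  (H : forall a : M, is_open a -> is_open (f a)) : OFrame M -> OFrame N :=
  fun x => exist _ (f (proj1_sig x)) (H _ (proj2_sig x)).

Record proximity {M N : MTAlg} (f : M -> N) : Prop := {
  px_open : forall a : M, is_open a -> is_open (f a);
  px_frame : frame_hom (restrO f px_open);
  px_meet : forall a b : M, f (cb_meet a b) = cb_meet (f a) (f b);
  (* (P3): finite subsets of LC M, given as lists *)
  px_lcjoin : forall l : list M, (forall x, In x l -> is_LC x) ->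
      f (cb_sup (fun x => In x l)) = cb_sup (img f (fun x => In x l));
  px_lc : forall a : M,
      f a = cb_sup (img f (fun x => is_LC x /\ cb_le x a))
}.

Definition starc {M1 M2 M3 : MTAlg} (g : M2 -> M3) (f : M1 -> M2) (a : M1) : M3 :=
  cb_sup (img (fun x => g (f x)) (fun x => is_LC x /\ cb_le x a)).

Definition idP (M : MTAlg) (a : M) : M :=
  cb_sup (fun x => is_LC x /\ cb_le x a).

Definition MTP_iso {M N : MTAlg} (f : M -> N) : Prop :=
  proximity f /\
  exists g : N -> M, proximity g /\
    (forall a, starc g f a = idP M a) /\ (forall b, starc f g b = idP N b).

Definition MTP_mono {M N : MTAlg} (f : M -> N) : Prop :=
  forall (L : MTAlg) (g1 g2 : L -> M), proximity g1 -> proximity g2 ->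
    (forall a, starc f g1 a = starc f g2 a) -> forall a, g1 a = g2 a.

Definition MTP_epi {M N : MTAlg} (f : M -> N) : Prop :=
  forall (L : MTAlg) (g1 g2 : N -> L), proximity g1 -> proximity g2 ->
    (forall a, starc g1 f a = starc g2 f a) -> forall b, g1 b = g2 b.

(* Main.v *)
Require Import Defs.
From Stdlib Require Import List ProofIrrelevance FunctionalExtensionality PropExtensionality Classical.

Set Implicit Arguments.

Ltac mle :=
  solve [ apply cb_refl | assumption | apply cb_bot_le | apply cb_top_ge
  | apply cb_meet_univ; mle
  | apply cb_join_univ; mle
  | eapply cb_trans; [apply cb_meet_l | mle]
  | eapply cb_trans; [apply cb_meet_r | mle]
  | eapply cb_trans; [ | apply cb_join_l ]; mle
  | eapply cb_trans; [ | apply cb_join_r ]; mle ].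

Section CBAL.
Context {B : CBA}.
Implicit Types a b c x y z : B.

Lemma meet_comm a b : cb_meet a b = cb_meet b a.
Proof. apply cb_antisym; mle. Qed.
Lemma join_comm a b : cb_join a b = cb_join b a.
Proof. apply cb_antisym; mle. Qed.
Lemma le_meet_eq a b : cb_le a b -> cb_meet a b = a.
Proof. intros; apply cb_antisym; mle. Qed.
Lemma distr_r a b c : cb_meet (cb_join b c) a = cb_join (cb_meet b a) (cb_meet c a).
Proof. rewrite meet_comm, cb_distr, (meet_comm a b), (meet_comm a c); reflexivity. Qed.
Lemma compl_le a z : cb_le (cb_meet a (cb_neg a)) z.
Proof. rewrite cb_compl_meet; apply cb_bot_le. Qed.
Lemma compl_le' a z : cb_le (cb_meet (cb_neg a) a) z.
Proof. rewrite meet_comm; apply compl_le. Qed.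
Lemma le_split x c z : cb_le (cb_meet x c) z -> cb_le (cb_meet x (cb_neg c)) z -> cb_le x z.
Proof.
  intros H1 H2. apply cb_trans with (cb_meet x (cb_join c (cb_neg c))).
  - rewrite cb_compl_join; mle.
  - rewrite cb_distr; mle.
Qed.
Lemma shunt1 a b c : cb_le (cb_meet a (cb_neg c)) b -> cb_le a (cb_join b c).
Proof. intros H; apply le_split with c; [mle | eapply cb_trans; [exact H| mle]]. Qed.
Lemma shunt2 a b c : cb_le a (cb_join b c) -> cb_le (cb_meet a (cb_neg c)) b.
Proof.
  intros H. apply cb_trans with (cb_meet (cb_join b c) (cb_neg c)); [mle|].
  rewrite distr_r. apply cb_join_univ; [mle| apply compl_le].
Qed.
Lemma neg_neg a : cb_neg (cb_neg a) = a.
Proof.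
  apply cb_antisym.
  - apply le_split with a; [mle | apply compl_le'].
  - apply le_split with (cb_neg a); [apply compl_le | mle].
Qed.
Lemma neg_anti a b : cb_le a b -> cb_le (cb_neg b) (cb_neg a).
Proof.
  intros H; apply le_split with a; [| mle].
  apply cb_trans with (cb_meet (cb_neg b) b); [mle | apply compl_le'].
Qed.
Lemma deMorgan a b : cb_neg (cb_join a b) = cb_meet (cb_neg a) (cb_neg b).
Proof.
  apply cb_antisym.
  - apply cb_meet_univ; apply neg_anti; mle.
  - apply le_split with (cb_join a b); [|mle].
    rewrite cb_distr; apply cb_join_univ.
    + apply cb_trans with (cb_meet (cb_neg a) a); [mle| apply compl_le'].
    + apply cb_trans with (cb_meet (cb_neg b) b); [mle| apply compl_le'].
Qed.
Lemma neg_bot : cb_neg (@cb_bot B) = cb_top.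
Proof.
  apply cb_antisym; [mle|]. apply le_split with cb_bot; [|mle].
  apply cb_trans with (@cb_bot B); [mle|mle].
Qed.
Lemma disj_diff x y z : cb_join x y = z -> cb_meet x y = cb_bot -> x = cb_meet z (cb_neg y).
Proof.
  intros Hj Hm. apply cb_antisym.
  - apply cb_meet_univ; [rewrite <- Hj; mle|].
    apply le_split with y; [rewrite Hm; mle | mle].
  - apply shunt2. rewrite Hj; mle.
Qed.
Lemma sup_ext (S T : B -> Prop) : (forall x, S x <-> T x) -> cb_sup S = cb_sup T.
Proof.
  intros H; apply cb_antisym; apply cb_sup_least; intros x Hx;
  apply cb_sup_ub; apply H; exact Hx.
Qed.
Lemma sup_empty (S : B -> Prop) : (forall x, ~ S x) -> cb_sup S = cb_bot.
Proof. intros H; apply cb_antisym; [apply cb_sup_least; intros x Hx; destruct (H x Hx)| mle]. Qed.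
Lemma sup_cons (S : B -> Prop) a : cb_sup (fun y => y = a \/ S y) = cb_join a (cb_sup S).
Proof.
  apply cb_antisym.
  - apply cb_sup_least; intros x [->|Hx]; [mle|].
    eapply cb_trans; [apply cb_sup_ub; exact Hx| mle].
  - apply cb_join_univ; [apply cb_sup_ub; auto|].
    apply cb_sup_least; intros x Hx; apply cb_sup_ub; auto.
Qed.
Lemma meet_sup_le a (S : B -> Prop) c : (forall x, S x -> cb_le (cb_meet a x) c) ->
  cb_le (cb_meet a (cb_sup S)) c.
Proof.
  intros H; rewrite cb_inf_distr; apply cb_sup_least; intros y [x [Hx ->]]; auto.
Qed.
Lemma sup_le_sup (S T : B -> Prop) : (forall x, S x -> cb_le x (cb_sup T)) -> cb_le (cb_sup S) (cb_sup T).
Proof. intros; apply cb_sup_least; auto. Qed.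
End CBAL.
Arguments neg_bot {B}.
Section MTL.
Context {M : MTAlg}.
Implicit Types a b c u v x y : M.

Lemma open_box a : is_open (box a).
Proof. unfold is_open; apply cb_antisym; [apply box_le | apply box_4]. Qed.
Lemma box_bot : box (@cb_bot M) = cb_bot.
Proof. apply cb_antisym; [apply box_le| mle]. Qed.
Lemma dia_top : dia (@cb_top M) = cb_top.
Proof.
  unfold dia. apply cb_antisym; [mle|].
  assert (E: cb_neg (@cb_top M) = cb_bot).
  { apply cb_antisym; [|mle]. apply cb_trans with (cb_meet (cb_neg (@cb_top M)) cb_top); [mle| apply compl_le']. }
  rewrite E, box_bot, neg_bot; mle.
Qed.
Lemma dia_neg_open (q : M) : is_open q -> dia (cb_neg q) = cb_neg q.
Proof. unfold dia; intros H; rewrite neg_neg, H; reflexivity. Qed.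
Lemma LC_open (q : M) : is_open q -> is_LC q.
Proof.
  intros H; exists q, cb_top. rewrite dia_top, H. apply cb_antisym; mle.
Qed.
Lemma LC_diff (p q : M) : is_open p -> is_open q -> is_LC (cb_meet p (cb_neg q)).
Proof. intros Hp Hq; exists p, (cb_neg q). rewrite dia_neg_open, Hp; auto. Qed.
Lemma LC_dec (x : M) : is_LC x -> exists u v, is_open u /\ is_open v /\ cb_le v u /\
   x = cb_meet u (cb_neg v).
Proof.
  intros [b [c ->]]. exists (box b), (cb_meet (box b) (box (cb_neg c))).
  split; [apply open_box|]. split; [apply open_meet; apply open_box|].
  split; [mle|]. unfold dia. apply cb_antisym.
  - apply cb_meet_univ; [mle|].
    eapply cb_trans; [apply cb_meet_r| apply neg_anti; mle].
  - apply cb_meet_univ; [mle|].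
    apply le_split with (box (cb_neg c)); [|mle].
    apply cb_trans with (cb_meet (cb_meet (box b) (box (cb_neg c)))
       (cb_neg (cb_meet (box b) (box (cb_neg c))))); [mle | apply compl_le].
Qed.
End MTL.

Lemma sup_list_cons (B : CBA) (a : B) l :
  cb_sup (fun x => In x (a :: l)) = cb_join a (cb_sup (fun x => In x l)).
Proof.
  rewrite <- sup_cons. apply sup_ext; intros x; simpl; intuition.
Qed.
Lemma sup_img_cons (B C : CBA) (f : B -> C) (a : B) l :
  cb_sup (img f (fun x => In x (a :: l))) = cb_join (f a) (cb_sup (img f (fun x => In x l))).
Proof.
  rewrite <- sup_cons. apply sup_ext; intros y; unfold img; simpl; split.
  - intros [x [[->|Hx] ->]]; [left; auto| right; eauto].
  - intros [->| [x [Hx ->]]]; eauto.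
Qed.

Section Prox.
Context {M N : MTAlg}.
Context {F : M -> N}.
Hypothesis HF : proximity F.

Lemma prox_mono a b : cb_le a b -> cb_le (F a) (F b).
Proof.
  intros H. rewrite <- (le_meet_eq _ _ H), (px_meet HF). mle.
Qed.
Lemma prox_bot : F cb_bot = cb_bot.
Proof.
  pose proof (px_lcjoin HF nil) as H. simpl in H.
  rewrite (sup_empty (fun x => False)) in H by auto.
  rewrite H by contradiction. apply sup_empty. intros x [y [[] _]].
Qed.
Lemma prox_diff p q : is_open p -> is_open q -> cb_le q p ->
  F (cb_meet p (cb_neg q)) = cb_meet (F p) (cb_neg (F q)).
Proof.
  intros Hp Hq Hqp. apply disj_diff.
  - pose proof (px_lcjoin HF (cons (cb_meet p (cb_neg q)) (cons q nil))) as H.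
    rewrite sup_list_cons, sup_img_cons, sup_list_cons, sup_img_cons in H.
    rewrite (sup_empty (fun x => In x nil)), (sup_empty (img F (fun x => In x nil))) in H.
    + transitivity (F (cb_join (cb_meet p (cb_neg q)) (cb_join q cb_bot))).
      * rewrite H.
        -- apply cb_antisym; mle.
        -- intros x [<-|[<-|[]]]; [apply LC_diff | apply LC_open]; auto.
      * f_equal. apply cb_antisym; [apply cb_join_univ; [mle| apply cb_join_univ; [exact Hqp|mle]]|].
        apply le_split with q; [mle|]. apply cb_trans with (cb_meet p (cb_neg q)); mle.
    + intros y [x [[] _]].
    + intros x [].
  - rewrite <- (px_meet HF). rewrite <- prox_bot. f_equal.
    apply cb_antisym; [|mle]. apply cb_trans with (cb_meet q (cb_neg q)); [mle| apply compl_le].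
Qed.
End Prox.

Lemma starc_LC (A B C : MTAlg) (F : B -> C) (G : A -> B) :
  proximity F -> proximity G -> forall x, is_LC x -> starc F G x = F (G x).
Proof.
  intros HF HG x Hx. unfold starc. apply cb_antisym.
  - apply cb_sup_least; intros y [z [[_ Hz] ->]]. apply (prox_mono HF), (prox_mono HG), Hz.
  - apply cb_sup_ub. exists x; split; [split; [auto|apply cb_refl]|auto].
Qed.
Lemma idP_LC (A : MTAlg) (x : A) : is_LC x -> idP A x = x.
Proof.
  intros Hx; unfold idP; apply cb_antisym.
  - apply cb_sup_least; intros y [_ H]; exact H.
  - apply cb_sup_ub; split; [auto|apply cb_refl].
Qed.
Lemma prox_uniq (M N : MTAlg) (G1 G2 : M -> N) : proximity G1 -> proximity G2 ->
  (forall u, is_open u -> G1 u = G2 u) -> forall a, G1 a = G2 a.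
Proof.
  intros H1 H2 He a. rewrite (px_lc H1), (px_lc H2). apply sup_ext; intros y; split;
  intros [x [[Hx Hxa] ->]]; exists x; (split; [split; auto|]);
  destruct (LC_dec Hx) as [u [v [Hu [Hv [Hvu ->]]]]];
  rewrite (prox_diff H1), (prox_diff H2), !He; auto.
Qed.
Notation pr := proj1_sig.

Definition op_bot (N : MTAlg) : Op N := @op_sup N (fun _ => False).
Definition op_join {N : MTAlg} (u v : Op N) : Op N := @op_sup N (fun w => w = u \/ w = v).

Lemma pr_op_bot (N : MTAlg) : pr (op_bot N) = cb_bot.
Proof. simpl. apply sup_empty. intros x [y [[] _]]. Qed.
Lemma pr_op_meet (N : MTAlg) (u v : Op N) : pr (@op_meet N u v) = cb_meet (pr u) (pr v).
Proof. reflexivity. Qed.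
Lemma pr_op_join (N : MTAlg) (u v : Op N) : pr (op_join u v) = cb_join (pr u) (pr v).
Proof.
  simpl. apply cb_antisym.
  - apply cb_sup_least. intros x [y [[->| ->] ->]]; mle.
  - apply cb_join_univ; apply cb_sup_ub; [exists u| exists v]; auto.
Qed.

Lemma OF_meet (N : MTAlg) : @fr_meet (OFrame N) = @op_meet N. Proof. reflexivity. Qed.
Lemma OF_top (N : MTAlg) : @fr_top (OFrame N) = op_top N. Proof. reflexivity. Qed.
Lemma OF_sup (N : MTAlg) : @fr_sup (OFrame N) = @op_sup N. Proof. reflexivity. Qed.

Section Ext.
Context {M N : MTAlg}.
Variable h : OFrame N -> OFrame M.
Hypothesis Hh : frame_hom h.

Definition H (u : Op N) : M := pr (h u).

Lemma H_meet u v : H (@op_meet N u v) = cb_meet (H u) (H v).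
Proof. unfold H. destruct Hh as [Hm _]. rewrite OF_meet in Hm. rewrite Hm. reflexivity. Qed.
Lemma H_sup S : H (@op_sup N S) = cb_sup (@op_supset M (img h S)).
Proof. unfold H. destruct Hh as [_ [_ Hs]]. rewrite OF_sup in Hs. rewrite Hs. reflexivity. Qed.
Lemma H_mono (u v : Op N) : cb_le (pr u) (pr v) -> cb_le (H u) (H v).
Proof.
  intros Hl. assert (E : @op_meet N u v = u) by (apply op_eq; simpl; apply le_meet_eq; exact Hl).
  rewrite <- E, H_meet. mle.
Qed.
Lemma H_join u v : H (op_join u v) = cb_join (H u) (H v).
Proof.
  unfold op_join. rewrite H_sup. apply cb_antisym.
  - apply cb_sup_least. intros x [y [[z [[->| ->] ->]] ->]]; unfold H; mle.
  - apply cb_join_univ; apply cb_sup_ub; [exists (h u)| exists (h v)]; (split; [|reflexivity]);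
    [exists u | exists v]; auto.
Qed.
Lemma H_bot : H (op_bot N) = cb_bot.
Proof. unfold op_bot. rewrite H_sup. apply sup_empty. intros x [y [[z [[] _]] _]]. Qed.

Definition piece (a : N) (y : M) : Prop := exists u v : Op N,
  cb_le (cb_meet (pr u) (cb_neg (pr v))) a /\ y = cb_meet (H u) (cb_neg (H v)).
Definition gx (a : N) : M := cb_sup (piece a).

Lemma g_ge a (u v : Op N) : cb_le (cb_meet (pr u) (cb_neg (pr v))) a ->
  cb_le (cb_meet (H u) (cb_neg (H v))) (gx a).
Proof. intros Hl; apply cb_sup_ub; exists u, v; auto. Qed.
Lemma g_le a c : (forall u v : Op N, cb_le (cb_meet (pr u) (cb_neg (pr v))) a ->
  cb_le (cb_meet (H u) (cb_neg (H v))) c) -> cb_le (gx a) c.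
Proof. intros Hc; apply cb_sup_least; intros y [u [v [Hl ->]]]; auto. Qed.
Lemma g_mono a b : cb_le a b -> cb_le (gx a) (gx b).
Proof. intros Hab; apply g_le; intros u v Hl; apply g_ge; eapply cb_trans; eauto. Qed.
Lemma g_open (w : Op N) : gx (pr w) = H w.
Proof.
  apply cb_antisym.
  - apply g_le; intros u v Hl. apply shunt2.
    rewrite <- H_join. apply H_mono. rewrite pr_op_join. apply shunt1; exact Hl.
  - eapply cb_trans; [| apply (g_ge _ w (op_bot N))].
    + rewrite H_bot, neg_bot. mle.
    + rewrite pr_op_bot, neg_bot. mle.
Qed.
Lemma g_meet a b : gx (cb_meet a b) = cb_meet (gx a) (gx b).
Proof.
  apply cb_antisym; [apply cb_meet_univ; apply g_mono; mle|].
  unfold gx at 1. apply meet_sup_le. intros x [u [v [Hl ->]]].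
  rewrite meet_comm. unfold gx at 1. apply meet_sup_le. intros y [u' [v' [Hl' ->]]].
  eapply cb_trans; [| apply (g_ge _ (@op_meet N u u') (op_join v v'))].
  - rewrite H_meet, H_join, deMorgan. mle.
  - rewrite pr_op_meet, pr_op_join, deMorgan. apply cb_meet_univ.
    + eapply cb_trans; [| exact Hl']. mle.
    + eapply cb_trans; [| exact Hl]. mle.
Qed.
Lemma g_bot : gx cb_bot = cb_bot.
Proof.
  apply cb_antisym; [|mle]. apply g_le; intros u v Hl.
  apply shunt2. apply cb_trans with (H v); [|mle]. apply H_mono. apply cb_trans with (cb_join cb_bot (pr v)); [apply shunt1; exact Hl| mle].
Qed.
Lemma g_join_LC (x y : N) : is_LC x -> cb_le (gx (cb_join x y)) (cb_join (gx x) (gx y)).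
Proof.
  intros Hx. destruct (LC_dec Hx) as [u0 [v0 [Hu0 [Hv0 [_ ->]]]]].
  set (U := exist is_open u0 Hu0 : Op N). set (V := exist is_open v0 Hv0 : Op N).
  apply g_le; intros p q Hl.
  assert (HA : cb_le (cb_meet (H (@op_meet N p U)) (cb_neg (H (op_join q V)))) (gx (cb_meet u0 (cb_neg v0)))).
  { apply g_ge. rewrite pr_op_meet, pr_op_join, deMorgan; simpl; mle. }
  assert (HB : cb_le (cb_meet (H p) (cb_neg (H (op_join q U)))) (gx y)).
  { apply g_ge. rewrite pr_op_join, deMorgan; simpl.
    apply cb_trans with (cb_meet (cb_join (cb_meet u0 (cb_neg v0)) y) (cb_neg u0)).
    { apply cb_meet_univ; [|mle]. eapply cb_trans; [|exact Hl]. mle. }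
    rewrite distr_r. apply cb_join_univ; [|mle].
    apply cb_trans with (cb_meet u0 (cb_neg u0)); [mle| apply compl_le]. }
  assert (HC : cb_le (cb_meet (H (@op_meet N p V)) (cb_neg (H q))) (gx y)).
  { apply g_ge. rewrite pr_op_meet; simpl.
    apply cb_trans with (cb_meet (cb_join (cb_meet u0 (cb_neg v0)) y) v0).
    { apply cb_meet_univ; [|mle]. eapply cb_trans; [|exact Hl]. mle. }
    rewrite distr_r. apply cb_join_univ; [|mle].
    apply cb_trans with (cb_meet (cb_neg v0) v0); [mle| apply compl_le']. }
  rewrite H_meet, H_join, deMorgan in HA. rewrite H_join, deMorgan in HB. rewrite H_meet in HC.
  apply le_split with (H U).
  - apply le_split with (H V).
    + eapply cb_trans; [| apply cb_join_r]. eapply cb_trans; [|exact HC]. mle.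
    + eapply cb_trans; [| apply cb_join_l]. eapply cb_trans; [|exact HA]. mle.
  - eapply cb_trans; [| apply cb_join_r]. eapply cb_trans; [|exact HB]. mle.
Qed.

Lemma g_list (l : list N) : (forall x, In x l -> is_LC x) ->
  gx (cb_sup (fun x => In x l)) = cb_sup (img gx (fun x => In x l)).
Proof.
  induction l as [|a l IH]; intros HL.
  - rewrite (sup_empty (fun x => In x nil)) by (intros x []).
    rewrite g_bot. symmetry; apply sup_empty. intros y [x [[] _]].
  - rewrite sup_list_cons, sup_img_cons, <- IH by (intros; apply HL; simpl; auto).
    apply cb_antisym.
    + apply g_join_LC, HL; simpl; auto.
    + apply cb_join_univ; apply g_mono; mle.
Qed.

Lemma g_lc (a : N) : gx a = cb_sup (img gx (fun x => is_LC x /\ cb_le x a)).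
Proof.
  apply cb_antisym.
  - apply g_le; intros u v Hl.
    apply cb_trans with (gx (cb_meet (pr u) (cb_neg (pr v)))); [apply g_ge, cb_refl|].
    apply cb_sup_ub. eexists; split; [|reflexivity]. split; [|exact Hl].
    apply LC_diff; [exact (proj2_sig u) | exact (proj2_sig v)].
  - apply cb_sup_least; intros y [x [[_ Hx] ->]]; apply g_mono, Hx.
Qed.
End Ext.

Lemma extend (M N : MTAlg) (h : OFrame N -> OFrame M) : frame_hom h ->
  exists g : N -> M, proximity g /\ forall u : Op N, g (pr u) = pr (h u).
Proof.
  intros Hh. exists (gx h). 
  assert (P1 : forall a : N, is_open a -> is_open (gx h a)).
  { intros a Ha. change a with (pr (exist is_open a Ha)). rewrite g_open by exact Hh.
    exact (proj2_sig _). }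
  assert (E : restrO (gx h) P1 = h).
  { apply functional_extensionality; intros x. apply op_eq. simpl. apply g_open, Hh. }
  split; [|intros u; apply g_open, Hh].
  refine (@Build_proximity N M (gx h) P1 _ _ _ _).
  - rewrite E; exact Hh.
  - intros; apply g_meet, Hh.
  - intros; apply g_list; auto.
  - intros; apply g_lc.
Qed.
Lemma starc_id (A B : MTAlg) (F : B -> A) (G : A -> B) :
  (forall x, is_LC x -> F (G x) = x) -> forall a, starc F G a = idP A a.
Proof.
  intros Hc a. unfold starc, idP. apply sup_ext. intros y; split.
  - intros [x [[Hx Hxa] ->]]. rewrite Hc by exact Hx. auto.
  - intros [Hy Hya]. exists y; split; auto. rewrite Hc; auto.
Qed.

Lemma comp_LC (A B C : MTAlg) (F : B -> C) (G : A -> B) (HF : proximity F) (HG : proximity G)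
  (x : A) : is_LC x -> exists u v, is_open u /\ is_open v /\ x = cb_meet u (cb_neg v) /\
     F (G x) = cb_meet (F (G u)) (cb_neg (F (G v))).
Proof.
  intros Hx. destruct (LC_dec Hx) as [u [v [Hu [Hv [Hvu ->]]]]]. exists u, v.
  split; [auto|split; [auto|split; [auto|]]].
  rewrite (prox_diff HG) by auto. rewrite (prox_diff HF); auto.
  - apply (px_open HG); auto.
  - apply (px_open HG); auto.
  - apply (prox_mono HG); auto.
Qed.

Section Main.
Context {M N : MTAlg}.
Variable f : M -> N.
Hypothesis Hf : proximity f.

Lemma part1 : MTP_iso f <-> frame_iso (restrO f (px_open Hf)).
Proof.
  split.
  - intros [_ [g [Hg [E1 E2]]]]. split; [exact (px_frame Hf)|].
    exists (restrO g (px_open Hg)). split; [exact (px_frame Hg)|].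
    split; intros x; apply op_eq; simpl.
    + rewrite <- (starc_LC Hg Hf) by apply (LC_open (proj2_sig x)).
      rewrite E1. apply idP_LC, LC_open, (proj2_sig x).
    + rewrite <- (starc_LC Hf Hg) by apply (LC_open (proj2_sig x)).
      rewrite E2. apply idP_LC, LC_open, (proj2_sig x).
  - intros [_ [h [Hh [E1 E2]]]]. destruct (extend Hh) as [g [Hg Hgu]].
    split; [exact Hf|]. exists g. split; [exact Hg|]. split; apply starc_id.
    + intros x Hx. destruct (comp_LC Hg Hf Hx) as [u [v [Hu [Hv [Ex ->]]]]].
      assert (K : forall w (Hw : is_open w), g (f w) = w).
      { intros w Hw. change (f w) with (pr (restrO f (px_open Hf) (exist is_open w Hw))).
        rewrite Hgu, E1. reflexivity. }
      rewrite !K by auto. auto.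
    + intros x Hx. destruct (comp_LC Hf Hg Hx) as [u [v [Hu [Hv [Ex ->]]]]].
      assert (K : forall w (Hw : is_open w), f (g w) = w).
      { intros w Hw. change w with (pr (exist is_open w Hw)) at 1. rewrite Hgu.
        change (f (pr (h (exist is_open w Hw)))) with (pr (restrO f (px_open Hf) (h (exist is_open w Hw)))).
        rewrite E2. reflexivity. }
      rewrite !K by auto. auto.
Qed.

Lemma mono_back : frame_mono (restrO f (px_open Hf)) -> MTP_mono f.
Proof.
  intros Hm L g1 g2 H1 H2 Heq. apply (prox_uniq H1 H2). intros u Hu.
  assert (E : restrO g1 (px_open H1) (exist is_open u Hu) = restrO g2 (px_open H2) (exist is_open u Hu)).
  { apply (Hm (OFrame L)); [exact (px_frame H1) | exact (px_frame H2)|].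
    intros x. apply op_eq; simpl.
    rewrite <- (starc_LC Hf H1), <- (starc_LC Hf H2) by apply (LC_open (proj2_sig x)). apply Heq. }
  exact (f_equal (@proj1_sig _ _) E).
Qed.

Lemma epi_back : frame_epi (restrO f (px_open Hf)) -> MTP_epi f.
Proof.
  intros Hm L g1 g2 H1 H2 Heq. apply (prox_uniq H1 H2). intros u Hu.
  assert (E : restrO g1 (px_open H1) (exist is_open u Hu) = restrO g2 (px_open H2) (exist is_open u Hu)).
  { apply (Hm (OFrame L)); [exact (px_frame H1) | exact (px_frame H2)|].
    intros x. apply op_eq; simpl.
    rewrite <- (starc_LC H1 Hf), <- (starc_LC H2 Hf) by apply (LC_open (proj2_sig x)). apply Heq. }
  exact (f_equal (@proj1_sig _ _) E).
Qed.
End Main.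
Lemma comp_diff (A B C : MTAlg) (F : B -> C) (G : A -> B) (HF : proximity F) (HG : proximity G)
  (u v : A) : is_open u -> is_open v -> cb_le v u ->
  F (G (cb_meet u (cb_neg v))) = cb_meet (F (G u)) (cb_neg (F (G v))).
Proof.
  intros Hu Hv Hvu.
  rewrite (prox_diff HG) by auto. rewrite (prox_diff HF); auto.
  - apply (px_open HG); auto.
  - apply (px_open HG); auto.
  - apply (prox_mono HG); auto.
Qed.

Lemma fr_sup_ext (E : Frame) (S T : E -> Prop) : (forall x, S x <-> T x) -> fr_sup S = fr_sup T.
Proof.
  intros Hst; apply fr_antisym; apply fr_sup_least; intros x Hx;
  apply fr_sup_ub; apply Hst; exact Hx.
Qed.
Lemma fr_meet_comm (E : Frame) (a b : E) : fr_meet a b = fr_meet b a.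
Proof. apply fr_antisym; apply fr_meet_univ; (apply fr_meet_l || apply fr_meet_r). Qed.

Lemma comp_hom (A B C : Frame) (h1 : A -> B) (h2 : B -> C) :
  frame_hom h1 -> frame_hom h2 -> frame_hom (fun x => h2 (h1 x)).
Proof.
  intros [m1 [t1 s1]] [m2 [t2 s2]]. split; [|split].
  - intros a b; rewrite m1, m2; reflexivity.
  - rewrite t1, t2; reflexivity.
  - intros S. rewrite s1, s2. apply fr_sup_ext. intros y; split.
    + intros [x [[z [Hz ->]] ->]]. exists z; auto.
    + intros [z [Hz ->]]. exists (h1 z); split; auto. exists z; auto.
Qed.

Lemma pext (X : Type) (S T : X -> Prop) : (forall x, S x <-> T x) -> S = T.
Proof.
  intros Hst; apply functional_extensionality; intros x; apply propositional_extensionality; auto.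
Qed.

Definition PowCBA (X : Type) : CBA.
Proof.
  refine {| cb_car := X -> Prop;
            cb_le := fun S T => forall x, S x -> T x;
            cb_meet := fun S T x => S x /\ T x;
            cb_join := fun S T x => S x \/ T x;
            cb_top := fun _ => True;
            cb_bot := fun _ => False;
            cb_neg := fun S x => ~ S x;
            cb_sup := fun F x => exists T, F T /\ T x |}.
  - auto.
  - auto.
  - intros; apply pext; split; auto.
  - simpl; tauto.
  - simpl; tauto.
  - simpl; intros; split; auto.
  - simpl; tauto.
  - simpl; tauto.
  - simpl; intros a b c H1 H2 x [?|?]; auto.
  - simpl; auto.
  - simpl; tauto.
  - intros S x Hx y Hy; exists x; auto.
  - intros S c Hc x [T [HT HTx]]; exact (Hc T HT x HTx).
  - intros; apply pext; intros; tauto.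
  - intros; apply pext; intros; tauto.
  - intros; apply pext; intros x; split; auto. intros _. apply classic.
  - intros a S; apply pext; intros x; split.
    + intros [Ha [T [HT HTx]]]. exists (fun y => a y /\ T y); split; auto. exists T; auto.
    + intros [T [[U [HU ->]] [Ha HUx]]]. split; auto. exists U; auto.
Defined.

Definition Alex (E : Frame) : MTAlg.
Proof.
  refine {| mt_cba := PowCBA E; box := fun S x => forall y, fr_le y x -> S y |}.
  - apply pext; simpl; tauto.
  - intros a b; apply pext; simpl; intros x; split.
    + intros Hx; split; intros y Hy; apply (Hx y Hy).
    + intros [H1 H2] y Hy; split; auto.
  - simpl; intros a x Hx; apply Hx, fr_refl.
  - simpl; intros a x Hx y Hy z Hz; apply Hx; eapply fr_trans; eauto.
Defined.

Section AlexS.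
Variable E : Frame.

Definition sA (D : OFrame (Alex E)) : E := fr_sup (pr D).

Lemma down_closed (D : OFrame (Alex E)) x y : pr D x -> fr_le y x -> pr D y.
Proof.
  intros Hx Hy. destruct D as [D HD]; simpl in *. unfold is_open in HD.
  rewrite <- HD in Hx. exact (Hx y Hy).
Qed.

Lemma sA_hom : frame_hom sA.
Proof.
  split; [|split].
  - intros D1 D2. unfold sA. apply fr_antisym.
    + apply fr_sup_least. intros x [H1 H2]. apply fr_meet_univ; apply fr_sup_ub; auto.
    + rewrite fr_distr. apply fr_sup_least. intros z [y [Hy ->]].
      rewrite fr_meet_comm, fr_distr. apply fr_sup_least. intros w [x [Hx ->]].
      apply fr_sup_ub. simpl. split.
      * apply (down_closed D1 x); [auto| apply fr_meet_r].
      * apply (down_closed D2 y); [auto| apply fr_meet_l].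
  - unfold sA. apply fr_antisym; [apply fr_top_ge| apply fr_sup_ub; simpl; auto].
  - intros S. unfold sA. apply fr_antisym.
    + apply fr_sup_least. intros x [T [[D [HD ->]] HTx]].
      eapply fr_trans; [| apply fr_sup_ub; exists D; split; [exact HD| reflexivity]].
      apply fr_sup_ub; auto.
    + apply fr_sup_least. intros y [D [HD ->]]. apply fr_sup_least. intros x Hx.
      apply fr_sup_ub. exists (pr D); split; auto. exists D; auto.
Qed.

Lemma down_open (x : E) : @is_open (Alex E) (fun y => fr_le y x).
Proof.
  unfold is_open. apply pext. simpl. intros y; split.
  - intros Hy; apply Hy, fr_refl.
  - intros Hy z Hz; eapply fr_trans; eauto.
Qed.

Lemma sA_down (x : E) : sA (exist _ _ (down_open x)) = x.
Proof.
  unfold sA; simpl. apply fr_antisym.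
  - apply fr_sup_least; auto.
  - apply fr_sup_ub, fr_refl.
Qed.
End AlexS.
Section Main2.
Context {M N : MTAlg}.
Variable f : M -> N.
Hypothesis Hf : proximity f.

Lemma starc_eq_from (L : MTAlg) (G1 G2 : L -> M) (HG1 : proximity G1) (HG2 : proximity G2) :
  (forall u, is_open u -> f (G1 u) = f (G2 u)) -> forall a, starc f G1 a = starc f G2 a.
Proof.
  intros Ho a. unfold starc. apply sup_ext; intros y.
  assert (K : forall z, is_LC z -> f (G1 z) = f (G2 z)).
  { intros z Hz. destruct (LC_dec Hz) as [u [v [Hu [Hv [Hvu ->]]]]].
    rewrite (comp_diff Hf HG1), (comp_diff Hf HG2), !Ho; auto. }
  split; intros [z [[Hz Hza] ->]]; exists z; (split; [auto|]); rewrite K; auto.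
Qed.

Lemma mono_fwd : MTP_mono f -> frame_mono (restrO f (px_open Hf)).
Proof.
  intros Hm E g1 g2 Hg1 Hg2 Heq x.
  destruct (extend (comp_hom (sA_hom E) Hg1)) as [G1 [HG1 HG1u]].
  destruct (extend (comp_hom (sA_hom E) Hg2)) as [G2 [HG2 HG2u]].
  assert (Hall : forall a, G1 a = G2 a).
  { apply (Hm (Alex E) G1 G2 HG1 HG2). apply starc_eq_from; auto.
    intros u Hu. change u with (pr (exist is_open u Hu)). rewrite HG1u, HG2u.
    pose proof (Heq (sA (exist is_open u Hu))) as Hq.
    exact (f_equal (@proj1_sig _ _) Hq). }
  rewrite <- (sA_down E x). apply op_eq.
  rewrite <- HG1u, <- HG2u. apply Hall.
Qed.
End Main2.
Ltac fle := solve [ apply fr_refl | assumption | apply fr_top_ge | apply fr_meet_univ; fle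
  | eapply fr_trans; [apply fr_meet_l | fle] | eapply fr_trans; [apply fr_meet_r | fle] ].

Section Bool.
Variable E : Frame.
Variable b : E.

Definition imp (x c : E) : E := fr_sup (fun z => fr_le (fr_meet z x) c).

Lemma imp_spec z x c : fr_le z (imp x c) <-> fr_le (fr_meet z x) c.
Proof.
  split.
  - intros Hz. eapply fr_trans.
    + apply fr_meet_univ; [eapply fr_trans; [apply fr_meet_l| exact Hz] | apply fr_meet_r].
    + rewrite fr_meet_comm. unfold imp. rewrite fr_distr. apply fr_sup_least.
      intros w [v [Hv ->]]. rewrite fr_meet_comm. exact Hv.
  - intros Hz. apply fr_sup_ub. exact Hz.
Qed.
Lemma imp_anti x y c : fr_le x y -> fr_le (imp y c) (imp x c).
Proof.
  intros Hxy. apply imp_spec. eapply fr_trans; [| apply (proj1 (imp_spec (imp y c) y c) (fr_refl _ _))].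
  apply fr_meet_univ; [apply fr_meet_l| eapply fr_trans; [apply fr_meet_r| exact Hxy]].
Qed.
Lemma imp_mp x c : fr_le (fr_meet x (imp x c)) c.
Proof. rewrite fr_meet_comm. apply imp_spec, fr_refl. Qed.
Lemma le_imp_c x c : fr_le c (imp x c).
Proof. apply imp_spec, fr_meet_l. Qed.

Definition phi (x : E) : E := imp (imp x b) b.

Lemma phi_ext x : fr_le x (phi x).
Proof. apply imp_spec, imp_mp. Qed.
Lemma phi_mono x y : fr_le x y -> fr_le (phi x) (phi y).
Proof. intros; apply imp_anti, imp_anti; auto. Qed.
Lemma imp_phi x : imp (phi x) b = imp x b.
Proof.
  apply fr_antisym; [apply imp_anti, phi_ext|].
  apply imp_spec. apply (imp_mp (imp x b)).
Qed.
Lemma phi_idem x : phi (phi x) = phi x.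
Proof. change (imp (imp (phi x) b) b = phi x). rewrite imp_phi. reflexivity. Qed.
Lemma phi_meet x y : phi (fr_meet x y) = fr_meet (phi x) (phi y).
Proof.
  apply fr_antisym.
  - apply fr_meet_univ; apply phi_mono; [apply fr_meet_l| apply fr_meet_r].
  - apply imp_spec.
    set (q := imp (fr_meet x y) b).
    assert (A : fr_le (fr_meet q x) (imp y b)).
    { apply imp_spec. eapply fr_trans; [| apply (imp_mp (fr_meet x y))]. fold q. fle. }
    assert (B2 : fr_le (fr_meet q (phi y)) (imp x b)).
    { apply imp_spec. eapply fr_trans; [| apply (imp_mp (imp y b))].
      apply fr_meet_univ; [eapply fr_trans; [|exact A]; fle| unfold phi; fle]. }
    eapply fr_trans; [| apply (imp_mp (imp x b))].
    apply fr_meet_univ; [eapply fr_trans; [|exact B2]; fle| unfold phi; fle].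
Qed.
Lemma imp_top c : imp fr_top c = c.
Proof.
  apply fr_antisym.
  - eapply fr_trans; [| apply (imp_mp fr_top)]. apply fr_meet_univ; [apply fr_top_ge| apply fr_refl].
  - apply le_imp_c.
Qed.
Lemma imp_self c : imp c c = fr_top.
Proof. apply fr_antisym; [apply fr_top_ge| apply imp_spec, fr_meet_r]. Qed.
Lemma phi_top : phi fr_top = fr_top.
Proof. unfold phi. rewrite imp_top, imp_self. reflexivity. Qed.
Lemma phi_b : phi b = b.
Proof. unfold phi. rewrite imp_self, imp_top. reflexivity. Qed.
Lemma phi_imp x : phi (imp x b) = imp x b.
Proof. unfold phi. fold (phi x). apply imp_phi. Qed.

Definition BT : Type := {x : E | phi x = x}.
Lemma B_eq (x y : BT) : pr x = pr y -> x = y.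
Proof. destruct x, y; simpl; intros ->; f_equal; apply proof_irrelevance. Qed.
Lemma B_fix (x : BT) : phi (pr x) = pr x.
Proof. exact (proj2_sig x). Qed.
Lemma b_le (x : BT) : fr_le b (pr x).
Proof. rewrite <- B_fix. apply le_imp_c. Qed.

Definition mkB (x : E) : BT := exist _ (phi x) (phi_idem x).
Definition bsup (S : BT -> Prop) : BT := mkB (fr_sup (fun z => exists w, S w /\ z = pr w)).
Definition bmeet (x y : BT) : BT := exist _ (fr_meet (pr x) (pr y))
  (eq_trans (phi_meet _ _) (f_equal2 _ (B_fix x) (B_fix y))).
Definition btop : BT := exist _ fr_top phi_top.
Definition bbot : BT := exist _ b phi_b.
Definition bneg (x : BT) : BT := exist _ (imp (pr x) b) (phi_imp _).
Definition bjoin (x y : BT) : BT := bsup (fun w => w = x \/ w = y).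
Definition ble (x y : BT) : Prop := fr_le (pr x) (pr y).

Lemma bsup_ext S T : (forall w, S w <-> T w) -> bsup S = bsup T.
Proof.
  intros Hst. apply B_eq. simpl. f_equal. apply fr_sup_ext.
  intros z; split; intros [w [Hw ->]]; exists w; split; auto; apply Hst; auto.
Qed.
Lemma bsup_ub S x : S x -> ble x (bsup S).
Proof.
  intros Hx. unfold ble; simpl. eapply fr_trans; [| apply phi_ext]. apply fr_sup_ub; eauto.
Qed.
Lemma bsup_least S c : (forall x, S x -> ble x c) -> ble (bsup S) c.
Proof.
  intros Hc. unfold ble; simpl. rewrite <- B_fix. apply phi_mono.
  apply fr_sup_least. intros z [w [Hw ->]]. apply Hc; auto.
Qed.
Lemma b_inf_distr a S : bmeet a (bsup S) = bsup (fun y => exists x, S x /\ y = bmeet a x).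
Proof.
  apply B_eq. simpl.
  transitivity (fr_meet (phi (pr a)) (phi (fr_sup (fun z => exists w, S w /\ z = pr w)))).
  { rewrite B_fix. reflexivity. }
  rewrite <- phi_meet, fr_distr. f_equal. apply fr_sup_ext. intros y; split.
  - intros [x [[w [Hw ->]] ->]]. exists (bmeet a w); split; [exists w; auto| reflexivity].
  - intros [w [[x [Hx ->]] ->]]. exists (pr x); split; [exists x; auto| reflexivity].
Qed.

Definition BCBA : CBA.
Proof.
  refine {| cb_car := BT; cb_le := ble; cb_meet := bmeet; cb_join := bjoin;
            cb_top := btop; cb_bot := bbot; cb_neg := bneg; cb_sup := bsup |}; unfold ble.
  - intros; apply fr_refl.
  - intros x y z; apply fr_trans.
  - intros x y H1 H2; apply B_eq, fr_antisym; auto.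
  - intros; apply fr_meet_l.
  - intros; apply fr_meet_r.
  - intros; apply fr_meet_univ; auto.
  - intros x y; apply (bsup_ub (fun w => w = x \/ w = y)); auto.
  - intros x y; apply (bsup_ub (fun w => w = x \/ w = y)); auto.
  - intros x y c H1 H2; apply bsup_least; intros w [-> | ->]; auto.
  - intros; apply fr_top_ge.
  - intros; apply b_le.
  - intros S x Hx; apply bsup_ub; auto.
  - intros S c Hc; apply bsup_least; auto.
  - intros x y z. unfold bjoin. rewrite b_inf_distr. apply bsup_ext.
    intros w; split; [intros [v [[-> | ->] ->]]; auto| intros [-> | ->]; eauto].
  - intros x. apply B_eq; simpl. apply fr_antisym; [apply imp_mp|].
    apply fr_meet_univ; [apply b_le| apply le_imp_c].
  - intros x. apply B_eq; simpl. apply fr_antisym; [apply fr_top_ge|].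
    set (s := fr_sup _).
    assert (K : fr_le (imp s b) b).
    { eapply fr_trans; [| apply (imp_mp (imp (pr x) b))].
      apply fr_meet_univ; apply imp_anti; apply fr_sup_ub.
      - exists x; split; auto.
      - exists (bneg x); split; auto. }
    unfold phi. rewrite <- (imp_self b). apply imp_anti, K.
  - intros; apply b_inf_distr.
Defined.

Definition BoolMT : MTAlg.
Proof.
  refine {| mt_cba := BCBA; box := fun x => x |}; auto; intros; apply cb_refl.
Defined.

Definition phiO (x : E) : OFrame BoolMT := exist (@is_open BoolMT) (mkB x) eq_refl.

Lemma phiO_hom : frame_hom phiO.
Proof.
  split; [|split].
  - intros x y. apply op_eq. apply B_eq. simpl. apply phi_meet.
  - apply op_eq. apply B_eq. simpl. apply phi_top.
  - intros S. apply op_eq. apply B_eq. simpl. apply fr_antisym.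
    + apply phi_mono. apply fr_sup_least. intros x Hx.
      eapply fr_trans; [apply phi_ext|]. apply fr_sup_ub.
      exists (mkB x); split; [| reflexivity]. exists (phiO x); split; [exists x; auto| reflexivity].
    + rewrite <- (phi_idem (fr_sup S)). apply phi_mono. apply fr_sup_least.
      intros z [w [[o [[x [Hx ->]] ->]] ->]]. simpl. apply phi_mono, fr_sup_ub, Hx.
Qed.

Lemma phiO_sep x : fr_le x (pr (pr (phiO x))) /\ pr (pr (phiO b)) = b.
Proof. split; [apply phi_ext| apply phi_b]. Qed.
End Bool.
Section Main3.
Context {M N : MTAlg}.
Variable f : M -> N.
Hypothesis Hf : proximity f.

Lemma starc_eq_from2 (L : MTAlg) (G1 G2 : N -> L) (HG1 : proximity G1) (HG2 : proximity G2) :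
  (forall u, is_open u -> G1 (f u) = G2 (f u)) -> forall a, starc G1 f a = starc G2 f a.
Proof.
  intros Ho a. unfold starc. apply sup_ext; intros y.
  assert (K : forall z, is_LC z -> G1 (f z) = G2 (f z)).
  { intros z Hz. destruct (LC_dec Hz) as [u [v [Hu [Hv [Hvu ->]]]]].
    rewrite (comp_diff HG1 Hf), (comp_diff HG2 Hf), !Ho; auto. }
  split; intros [z [[Hz Hza] ->]]; exists z; (split; [auto|]); rewrite K; auto.
Qed.

Lemma epi_le : MTP_epi f -> forall (E : Frame) (g1 g2 : OFrame N -> E),
  frame_hom g1 -> frame_hom g2 ->
  (forall x, g1 (restrO f (px_open Hf) x) = g2 (restrO f (px_open Hf) x)) ->
  forall y, fr_le (g1 y) (g2 y).
Proof.
  intros Hm E g1 g2 Hg1 Hg2 Heq y.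
  set (b := g2 y).
  destruct (extend (comp_hom Hg1 (phiO_hom E b))) as [G1 [HG1 HG1u]].
  destruct (extend (comp_hom Hg2 (phiO_hom E b))) as [G2 [HG2 HG2u]].
  assert (Hall : forall a, G1 a = G2 a).
  { apply (Hm (BoolMT E b) G1 G2 HG1 HG2). apply starc_eq_from2; auto.
    intros u Hu. change (f u) with (pr (restrO f (px_open Hf) (exist is_open u Hu))).
    rewrite HG1u, HG2u, Heq. reflexivity. }
  pose proof (Hall (pr y)) as K. rewrite HG1u, HG2u in K.
  pose proof (f_equal (@proj1_sig _ _) K) as K2. simpl in K2.
  eapply fr_trans; [apply (phi_ext E b (g1 y))|]. rewrite K2. fold b. rewrite (phi_b E b). apply fr_refl.
Qed.

Lemma epi_fwd : MTP_epi f -> frame_epi (restrO f (px_open Hf)).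
Proof.
  intros Hm E g1 g2 Hg1 Hg2 Heq y. apply fr_antisym.
  - apply (epi_le Hm); auto.
  - apply (epi_le Hm); auto.
Qed.
End Main3.

Theorem proposition4p14 (M N : MTAlg) (f : M -> N) (Hf : proximity f) :
  (MTP_iso f <-> frame_iso (restrO f (px_open Hf))) /\
  (MTP_mono f <-> frame_mono (restrO f (px_open Hf))) /\
  (MTP_epi f <-> frame_epi (restrO f (px_open Hf))).
Proof.
  split; [apply part1|split; split].
  - apply mono_fwd.
  - apply mono_back.
  - apply epi_fwd.
  - apply epi_back.
Qed.
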